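(* Let $R$ be a localizable partially ordered commutative ring with $\mathbb{N}\subseteq\mathrm{Loc}(R)$. Then $\mathcal{K}(R)$ is a compact Hausdorff space and $\{r\in R : \widehat r\in \mathscr{C}_\approx(\mathcal{D}_{\mathrm{loc}}(R))^+\} = (R^+)^\ddagger$, where $(R^+)^\ddagger=\{g\in R: \text{there is } h\in R \text{ with } kg+h\in R^+ \text{ for all } k\in\mathbb{N}\}$.
   Context: All rings are commutative with unit $1$; ring morphisms are unital. A partially ordered commutative ring is a commutative ring $R$ with a partial order $\le$ such that $r\le s$ implies $r+t\le s+t$, and whose positive cone $R^+=\{r:0\le r\}$ is closed under multiplication and contains all squares. $\mathbb{N}=\{1,2,\dots\}$, $\mathbb{N}_0=\mathbb{N}\cup\{0\}$. $\mathrm{Loc}(R)$ is the set of $s\in 1+R^+$ such that for all $r\in R$, $rs\in R^+$ implies $r\in R^+$; $R$ is localizable if for every $r\in R$ there is $s\in\mathrm{Loc}(R)$ with $-s\le r\le s$. ($\mathbb{N}\subseteq\mathrm{Loc}(R)$ means the elements $n\cdot1$ lie in $\mathrm{Loc}(R)$.) Admissible domains: for a topological space $Y$, an admissible set of domains is a set $\mathcal{D}$ of open subsets of $Y$ with $Y\in\mathcal{D}$, closed under finite intersections. On $\bigcup_{A\in\mathcal{D}}\mathscr{C}(A)$ define $f+g,fg$ pointwise on $\operatorname{dom}f\cap\operatorname{dom}g$; $f\approx g$ iff $f|_A=g|_A$ for some $A\in\mathcal{D}$, $A\subseteq\operatorname{dom}f\cap\operatorname{dom}g$. The quotient $\mathscr{C}_\approx(\mathcal{D})$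 is a partially ordered commutative ring with $[f]\ge 0$ iff $f|_A\ge0$ pointwise for some $A\in\mathcal{D}$, $A\subseteq\operatorname{dom}f$. Localization: $R_{\mathrm{loc}}$ consists of fractions $r/s$ ($r\in R$, $s\in\mathrm{Loc}(R)$), $r/s=r'/s'$ iff $rs'=r's$, usual operations, ordered by $p/q\le r/s$ iff $ps\le rq$. $R^{\mathrm{bd}}_{\mathrm{loc}}=\{a\in R_{\mathrm{loc}}:\exists n\in\mathbb{N}_0,\ -n\le a\le n\}$ (a subring). $\mathcal{K}(R)$ is the set of ring morphisms $\varphi\colon R^{\mathrm{bd}}_{\mathrm{loc}}\to\mathbb{R}$ with $\varphi(a)\ge 0$ whenever $a\ge0$, with the weak-$*$ topology (generated by $\{\varphi:\varphi(a)\in V\}$, $a\in R^{\mathrm{bd}}_{\mathrm{loc}}$, $V\subseteq\mathbb{R}$ open). For $s\in\mathrm{Loc}(R)$, $\mathrm{O}_{s<\infty}=\{\varphi:\varphi(1/s)>0\}$; $\mathcal{D}_{\mathrm{loc}}(R)=\{\mathrm{O}_{s<\infty}:s\in\mathrm{Loc}(R)\}$ is admissible. The extended Gelfand transformation sends $r\in R$ to $\widehat r$, the class of $r_s\colon\mathrm{O}_{s<\infty}\to\mathbb{R}$, $\varphi\mapsto\varphi(1/s)^{-1}\varphi(r/s)$, for any $s\in\mathrm{Loc}(R)$ with $r/s\in R^{\mathrm{bd}}_{\mathrm{loc}}$ (independent of $s$). *)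

(* Defs.v *)
From HB Require Import structures.
From mathcomp Require Import all_boot all_order all_algebra.
From mathcomp Require Import all_classical all_reals all_analysis.
From mathcomp Require Import Rstruct Rstruct_topology.
From Stdlib Require Rdefinitions.
Notation R := Rdefinitions.R.

Set Implicit Arguments.
Unset Strict Implicit.
Unset Printing Implicit Defensive.
Import Order.TTheory GRing.Theory Num.Theory.
Local Open Scope classical_set_scope.
Local Open Scope ring_scope.

Section PORing.
Variables (A : comPzRingType) (le : A -> A -> Prop).

Definition po_comring : Prop :=
  (forall r, le r r) /\
  (forall r s, le r s -> le s r -> r = s) /\
  (forall r s t, le r s -> le s t -> le r t) /\
  (forall r s t, le r s -> le (r + t) (s + t)) /\
  (forall r s, le 0 r -> le 0 s -> le 0 (r * s)) /\
  (forall r, le 0 (r * r)).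

Definition Loc (s : A) : Prop :=
  (exists p, le 0 p /\ s = 1 + p) /\ (forall r, le 0 (r * s) -> le 0 r).

Definition localizable : Prop :=
  forall r, exists s, Loc s /\ le (- s) r /\ le r s.

Definition nat_in_Loc : Prop := forall n : nat, (0 < n)%nat -> Loc n%:R.

(* Elements r/s of A_loc are represented by pairs (r, s) with Loc s;
   (r,s) ~ (r',s') iff r s' = r' s.  Order: p/q <= r/s iff p s <= r q. *)
Definition loc_le (p q : A * A) : Prop := le (p.1 * q.2) (q.1 * p.2).

Definition in_bd (p : A * A) : Prop :=
  Loc p.2 /\ exists n : nat, loc_le ((- n%:R), 1) p /\ loc_le p (n%:R, 1).

(* A character phi : A^bd_loc -> R, encoded as a function on pairs which
   vanishes off the (representatives of elements of) A^bd_loc. *)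
Definition is_char (phi : A * A -> R) : Prop :=
  (forall p, ~ in_bd p -> phi p = (0 : R)) /\
  (forall p q, in_bd p -> in_bd q -> p.1 * q.2 = q.1 * p.2 -> phi p = phi q) /\
  (forall p q, in_bd p -> in_bd q ->
      phi (p.1 * q.2 + q.1 * p.2, p.2 * q.2) = (phi p + phi q)) /\
  (forall p q, in_bd p -> in_bd q ->
      phi (p.1 * q.1, p.2 * q.2) = (phi p * phi q)) /\
  phi ((1 : A), (1 : A)) = (1 : R) /\
  (forall p, in_bd p -> loc_le (0, 1) p -> (0 <= phi p)).

(* The ambient space: functions on pairs with the pointwise (product)
   topology; on K(A) this induces the weak-* topology. *)
Definition charT := {ptws (A * A) -> R}.

Definition Kspace : set charT := [set phi | is_char phi].

Definition O_fin (s : A) : set charT := [set phi | Kspace phi /\ (0 < phi ((1 : A), s))].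

Definition D_loc : set (set charT) := [set O | exists s, Loc s /\ O = O_fin s].

(* the representative r_s : O_{s<oo} -> R of the extended Gelfand transform *)
Definition gelfand_rep (r s : A) (phi : charT) : R :=
  ((phi ((1 : A), s))^-1 * phi (r, s)).

Definition pos_dagger : set A :=
  [set g | exists h, forall k : nat, (0 < k)%nat -> le 0 (k%:R * g + h)].

End PORing.

Definition capprox_nonneg (Y : Type) (D : set (set Y)) (dom : set Y) (f : Y -> R) : Prop :=
  exists B, D B /\ B `<=` dom /\ (forall y, B y -> (0 <= f y)).

Definition gelfand_nonneg (A : comPzRingType) (le : A -> A -> Prop) (r : A) : Prop :=
  exists s, Loc le s /\ in_bd le (r, s) /\
    capprox_nonneg (D_loc le) (O_fin le s) (gelfand_rep r s).

(* Main.v *)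
Require Import Defs.
From HB Require Import structures.
From mathcomp Require Import all_boot all_order all_algebra.
From mathcomp Require Import all_classical all_reals all_analysis.
From mathcomp Require Import Rstruct Rstruct_topology.
From mathcomp Require Import ring lra zify.
Import Order.TTheory GRing.Theory Num.Theory.
Set Implicit Arguments.
Unset Strict Implicit.
Unset Printing Implicit Defensive.

Module KDM.
Lemma bern_nat (x m : nat) : x ^ m * (x + m) <= (x + 1) ^ m * x.
Proof.
elim: m => [|m IH]; first by rewrite !expn0 addn0 !mul1n.
rewrite !expnS.
move: IH; set a := x ^ m; set b := (x + 1) ^ m => IH.
have h1 : (x + 1) * (a * (x + m)) <= (x + 1) * (b * x) by rewrite leq_mul2l IH orbT.
have h2 : x * a * (x + m.+1) <= (x + 1) * (a * (x + m)) by nia.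
nia.
Qed.

Lemma big_pow_nat (x M : nat) : (0 < x)%N -> exists m, M * x ^ m <= (x + 1) ^ m.
Proof.
move=> x0; exists (M * x).
have h := bern_nat x (M * x).
move: h; set a := x ^ (M * x); set b := (x + 1) ^ (M * x) => h.
have h2 : a * (x * M) <= b * x by apply: leq_trans h; rewrite leq_mul2l; apply/orP; right; nia.
rewrite -(leq_pmul2r x0); nia.
Qed.

Local Open Scope classical_set_scope.
Local Open Scope ring_scope.
Lemma intrD2 (Rt : pzRingType) (m : int) : (m + 2)%:~R = m%:~R + 2%:R :> Rt.
Proof. by rewrite intrD. Qed.
Lemma intrD4 (Rt : pzRingType) (m : int) : (m + 4)%:~R = m%:~R + 4%:R :> Rt.
Proof. by rewrite intrD. Qed.

Section KD.
Variables (B : comPzRingType) (P : B -> Prop).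
Hypotheses (Padd : forall x y, P x -> P y -> P (x + y))
  (Pmul : forall x y, P x -> P y -> P (x * y))
  (Psq : forall x, P (x * x))
  (Parch : forall x, exists n : nat, P (n%:R - x) /\ P (n%:R + x))
  (Pinv : forall n : nat, (0 < n)%N -> exists y, P y /\ n%:R * y = 1).

Lemma P1 : P 1. Proof. by rewrite -(mulr1 1); apply: Psq. Qed.
Lemma P0 : P 0. Proof. by rewrite -(mulr0 0); apply: Psq. Qed.
Lemma Pnat n : P n%:R.
Proof. elim: n => [|n IH]; first exact: P0. by rewrite -addn1 natrD; apply: Padd => //; apply: P1. Qed.
Lemma Pexp x m : P x -> P (x ^+ m).
Proof. move=> Px; elim: m => [|m IH]; first by rewrite expr0; apply: P1. by rewrite exprS; apply: Pmul. Qed.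
Lemma Pdiv n x : (0 < n)%N -> P (n%:R * x) -> P x.
Proof.
move=> n0 Pnx; have [y [Py ny]] := Pinv n0.
have -> : x = y * (n%:R * x) by rewrite mulrA (mulrC y) ny mul1r.
by apply: Pmul.
Qed.

Lemma archP x : exists n : nat, P (n%:R - x) /\ P (n%:R + x) /\ (0 < n)%N.
Proof.
have [n [h1 h2]] := Parch x; exists n.+1; split; last split => //.
- have -> : n.+1%:R - x = (n%:R - x) + 1 by rewrite -addn1 natrD; ring.
  by apply: Padd => //; apply: P1.
- have -> : n.+1%:R + x = (n%:R + x) + 1 by rewrite -addn1 natrD; ring.
  by apply: Padd => //; apply: P1.
Qed.

Lemma lemX c p q : P p -> P q -> c * p = 1 + q -> P (c + 1).
Proof.
move=> Pp Pq cpq.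
have [N [hN1 [_ N0]]] := archP p.
have [M0 [hM1 [hM2 M00]]] := archP c.
pose M := M0.+2.
have hM1' : P (M%:R - c).
  have -> : M%:R - c = (M0%:R - c) + 2%:R by rewrite /M -addn2 natrD; ring.
  by apply: Padd => //; apply: Pnat.
have hM2' : P (M%:R + c).
  have -> : M%:R + c = (M0%:R + c) + 2%:R by rewrite /M -addn2 natrD; ring.
  by apply: Padd => //; apply: Pnat.
set u := N%:R - p.
have hi : P (M%:R * p - 1).
  have -> : M%:R * p - 1 = p * (M%:R - c) + q.
    have e : M%:R * p - 1 - (p * (M%:R - c) + q) = c * p - (1 + q) by ring.
    by apply/eqP; rewrite -subr_eq0 e cpq subrr.
  by apply: Padd => //; apply: Pmul.
pose x := (N * M).-1.
have hx : x%:R + 1 = N%:R * M%:R :> B.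
  have NM0 : (0 < N * M)%N by rewrite muln_gt0 N0.
  by rewrite -natrM /x; case: (N * M)%N NM0 => // k _ /=; rewrite -addn1 natrD.
have x0 : (0 < x)%N.
  rewrite /x /M; move: N0; clear; case: N => // n _; rewrite mulSn; lia.
pose al := (x%:R + 1) * u.
pose be := N%:R * x%:R : B.
have hii : P (be - al).
  have -> : be - al = N%:R * (M%:R * p - 1).
    have e : be = N%:R * (x%:R + 1) - N%:R by rewrite /be; ring.
    rewrite e /al hx /u; ring.
  by apply: Pmul => //; apply: Pnat.
have hu : P u by [].
have hiii : forall m, P (c * (N%:R ^+ m - u ^+ m)).
  elim=> [|m IH]; first by rewrite !expr0 subrr mulr0; apply: P0.
  have -> : c * (N%:R ^+ m.+1 - u ^+ m.+1) = N%:R ^+ m * (c * p) + u * (c * (N%:R ^+ m - u ^+ m)).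
    rewrite /u !exprS; ring.
  by rewrite cpq; apply: Padd; apply: Pmul => //; [apply: Pexp; apply: Pnat | apply: Padd => //; apply: P1].
have Pal : P al by apply: Pmul => //; apply: Padd; [apply: Pnat|apply: P1].
have hiv : forall m, P (be ^+ m - al ^+ m).
  elim=> [|m IH]; first by rewrite !expr0 subrr; apply: P0.
  have -> : be ^+ m.+1 - al ^+ m.+1 = be * (be ^+ m - al ^+ m) + al ^+ m * (be - al) by rewrite !exprS; ring.
  by apply: Padd; apply: Pmul => //; [rewrite /be -natrM; apply: Pnat| apply: Pexp].
have [m hm] := big_pow_nat M x0.
have hv : P ((x%:R + 1) ^+ m * c + M%:R * x%:R ^+ m).
  apply: (@Pdiv (N ^ m)); first by rewrite expn_gt0 N0.
  have -> : (N ^ m)%:R * ((x%:R + 1) ^+ m * c + M%:R * x%:R ^+ m)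
     = (x%:R + 1) ^+ m * (c * (N%:R ^+ m - u ^+ m)) + al ^+ m * (M%:R + c) + M%:R * (be ^+ m - al ^+ m).
    rewrite natrX /al /be !exprMn; ring.
  have Px1 : P (x%:R + 1) by apply: Padd; [apply: Pnat|apply: P1].
  apply: Padd; first apply: Padd.
  - by apply: Pmul; [apply: Pexp|apply: hiii].
  - by apply: Pmul; [apply: Pexp|].
  - by apply: Pmul; [apply: Pnat|].
apply: (@Pdiv ((x + 1) ^ m)); first by rewrite expn_gt0 addn1.
have -> : ((x + 1) ^ m)%:R * (c + 1) = ((x%:R + 1) ^+ m * c + M%:R * x%:R ^+ m)
            + ((x + 1) ^ m - M * x ^ m)%:R.
  rewrite natrB // natrM !natrX natrD; ring.
by apply: Padd => //; apply: Pnat.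
Qed.


Section Total.
Variables (Rt : realType) (T : B -> Prop).
Hypotheses (TP : forall x, P x -> T x)
  (Tadd : forall x y, T x -> T y -> T (x + y))
  (Tmul : forall x y, T x -> T y -> T (x * y))
  (Tprop : ~ T (-1))
  (Ttot : forall x, T x \/ T (- x)).

Lemma Tnegnat j : (0 < j)%N -> ~ T (- j%:R).
Proof.
move=> j0 Tj; have [y [Py jy]] := Pinv j0.
apply: Tprop; have -> : -1 = (- j%:R) * y :> B by rewrite mulNr jy.
by apply: Tmul => //; apply: TP.
Qed.

Lemma Tint (d : int) : T d%:~R -> (0 <= d)%R.
Proof.
case: d => // j Tj; exfalso; apply: (@Tnegnat j.+1) => //.
Qed.

Lemma Tcmp x (m m' : int) (n n' : nat) :
  T (n%:R * x - m%:~R) -> T (m'%:~R - n'%:R * x) -> (m * n'%:Z <= m' * n%:Z)%R.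
Proof.
move=> h1 h2.
have : T ((m' * n%:Z - m * n'%:Z)%:~R).
  have -> : (m' * n%:Z - m * n'%:Z)%:~R = n'%:R * (n%:R * x - m%:~R) + n%:R * (m'%:~R - n'%:R * x) :> B.
    rewrite intrD intrN !intrM -?pmulrn ?mulrz_nat; ring.
  by apply: Tadd; apply: Tmul => //; apply: TP; apply: Pnat.
by move/Tint; rewrite subr_ge0.
Qed.

Definition cutset x : set Rt :=
  [set r | exists m : int, exists n : nat, [/\ (0 < n)%N, r = m%:~R / n%:R & T (n%:R * x - m%:~R)]].

Definition Phi x : Rt := sup (cutset x).

Lemma cut_ub x (m : int) (n : nat) : (0 < n)%N -> T (m%:~R - n%:R * x) -> ubound (cutset x) (m%:~R / n%:R).
Proof.
move=> n0 h r [m1 [n1 [n10 -> h1]]].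
have hc := Tcmp h1 h.
rewrite ler_pdivrMr ?ltr0n // mulrAC ler_pdivlMr ?ltr0n //.
by rewrite -[n%:R]/((n%:Z)%:~R) -[n1%:R]/((n1%:Z)%:~R) -!intrM ler_int.
Qed.

Lemma cut_ne x : cutset x !=set0.
Proof.
have [N [_ [hN _]]] := archP x.
exists ((- N%:Z)%:~R / 1%:R), (- N%:Z), 1%N; split => //.
apply: TP; rewrite intrN mul1r opprK addrC; exact: hN.
Qed.

Lemma cut_has_sup x : has_sup (cutset x).
Proof.
split; first exact: cut_ne.
have [N [hN _]] := archP x.
exists ((N%:Z)%:~R / 1%:R); apply: (@cut_ub x N%:Z 1) => //.
by apply: TP; rewrite mul1r.
Qed.

Lemma PhiA x (m : int) (n : nat) : (0 < n)%N -> T (n%:R * x - m%:~R) -> m%:~R <= n%:R * Phi x.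
Proof.
move=> n0 h; rewrite -ler_pdivrMl ?ltr0n // mulrC.
by apply: (sup_upper_bound (cut_has_sup x)); exists m, n.
Qed.

Lemma PhiB x (m : int) (n : nat) : (0 < n)%N -> T (m%:~R - n%:R * x) -> n%:R * Phi x <= m%:~R.
Proof.
move=> n0 h; rewrite -ler_pdivlMl ?ltr0n // mulrC.
by apply: ge_sup; [exact: cut_ne|exact: cut_ub].
Qed.

Lemma grid x (n : nat) : (0 < n)%N ->
  exists m : int, T (n%:R * x - m%:~R) /\ T ((m + 2)%:~R - n%:R * x).
Proof.
move=> n0; pose k := Num.floor (n%:R * Phi x).
have hk1 : k%:~R <= n%:R * Phi x by apply: Num.Theory.floor_le.
have hk2 : n%:R * Phi x < (k + 1)%:~R by apply: Num.Theory.floorD1_gt.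
exists (k - 1); split.
- case: (Ttot (n%:R * x - (k - 1)%:~R)) => // h.
  have := PhiB n0 (_ : T ((k - 1)%:~R - n%:R * x)).
  rewrite opprB in h => /(_ h) h2.
  have : (k%:~R : Rt) <= (k - 1)%:~R by apply: le_trans h2.
  by rewrite ler_int; lia.
- case: (Ttot ((k - 1 + 2)%:~R - n%:R * x)) => // h.
  rewrite opprB in h; have h2 := PhiA n0 h.
  have : ((k - 1 + 2)%:~R : Rt) < (k + 1)%:~R by apply: le_lt_trans h2 hk2.
  by rewrite ltr_int; lia.
Qed.


Lemma squeeze (d K : Rt) : (forall n : nat, (0 < n)%N -> n%:R * d <= K /\ - K <= n%:R * d) -> d = 0.
Proof.
move=> h; have [K0 _] : 0 <= K /\ True.
  by have [h1 h2] := h 1%N isT; split => //; lra.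
case: (ltrgtP d 0) => // hd; exfalso.
- pose n := (Num.truncn (K / (- d))).+1.
  have hn : K / (- d) < n%:R by apply: Num.Theory.truncnS_gt.
  have [_ h2] := h n isT.
  rewrite ltr_pdivrMr ?oppr_gt0 // in hn; lra.
- pose n := (Num.truncn (K / d)).+1.
  have hn : K / d < n%:R by apply: Num.Theory.truncnS_gt.
  have [h2 _] := h n isT.
  rewrite ltr_pdivrMr // in hn; lra.
Qed.

Lemma Phi_nat k : Phi k%:R = k%:R.
Proof.
apply/eqP; rewrite eq_le; apply/andP; split.
- have := @PhiB k%:R k%:Z 1 isT; rewrite mul1r !mul1r -[(k%:Z)%:~R]/(k%:R) subrr => /(_ (TP P0)) //.
- have := @PhiA k%:R k%:Z 1 isT; rewrite mul1r !mul1r -[(k%:Z)%:~R]/(k%:R) subrr => /(_ (TP P0)) //.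
Qed.

Lemma Phi_ge0 x : T x -> 0 <= Phi x.
Proof. move=> h; have := @PhiA x 0 1 isT; rewrite mul1r subr0 mul1r => /(_ h) //. Qed.

Lemma Phi_le0 x : T (- x) -> Phi x <= 0.
Proof. move=> h; have := @PhiB x 0 1 isT; rewrite mul1r sub0r mul1r => /(_ h) //. Qed.

Lemma PhiD x y : Phi (x + y) = Phi x + Phi y.
Proof.
apply/eqP; rewrite -subr_eq0; apply/eqP; apply: (@squeeze _ 4) => n n0.
have [m1 [h11 h12]] := grid x n0.
have [m2 [h21 h22]] := grid y n0.
have a1 := PhiA n0 h11; have b1 := PhiB n0 h12.
have a2 := PhiA n0 h21; have b2 := PhiB n0 h22.
have a3 : T (n%:R * (x + y) - (m1 + m2)%:~R).
  have -> : n%:R * (x + y) - (m1 + m2)%:~R = (n%:R * x - m1%:~R) + (n%:R * y - m2%:~R) by rewrite intrD; ring.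
  exact: Tadd.
have b3 : T ((m1 + m2 + 4)%:~R - n%:R * (x + y)).
  have -> : (m1 + m2 + 4)%:~R - n%:R * (x + y) = ((m1 + 2)%:~R - n%:R * x) + ((m2 + 2)%:~R - n%:R * y) :> B.
    by rewrite !intrD; ring.
  exact: Tadd.
have a4 := PhiA n0 a3; have b4 := PhiB n0 b3.
move: a1 b1 a2 b2 a4 b4; rewrite intrD4 !intrD2 intrD => a1 b1 a2 b2 a4 b4.
split; rewrite mulrBr mulrDr; lra.
Qed.

Lemma grid_pos x (n : nat) : (0 < n)%N -> T x ->
  exists a : nat, T (n%:R * x - a%:R) /\ T ((a + 2)%:R - n%:R * x).
Proof.
move=> n0 Tx; have [[a|j] [h1 h2]] := grid x n0.
- by exists a; split; [exact: h1| rewrite natrD; move: h2; rewrite intrD].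
- exists 0%N; split.
  + by rewrite subr0; apply: Tmul => //; apply: TP; apply: Pnat.
  + have -> : (0 + 2)%:R - n%:R * x = ((Negz j + 2)%:~R - n%:R * x) + j.+1%:R :> B.
      by rewrite intrD NegzE intrN; ring.
    by apply: Tadd => //; apply: TP; apply: Pnat.
Qed.

Lemma PhiM_pos x y : T x -> T y -> Phi (x * y) = Phi x * Phi y.
Proof.
move=> Tx Ty.
have X0 := Phi_ge0 Tx; have Y0 := Phi_ge0 Ty.
apply/eqP; rewrite -subr_eq0; apply/eqP.
apply: (@squeeze _ (2 * Phi x + 2 * Phi y + 4)) => n n0.
have [a [h11 h12]] := grid_pos n0 Tx.
have [b [h21 h22]] := grid_pos n0 Ty.
have nn0 : (0 < n * n)%N by rewrite muln_gt0 n0.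
have a3 : T ((n * n)%:R * (x * y) - (a * b)%:R).
  have -> : (n * n)%:R * (x * y) - (a * b)%:R = (n%:R * x - a%:R) * (n%:R * y - b%:R)
     + a%:R * (n%:R * y - b%:R) + b%:R * (n%:R * x - a%:R) by rewrite !natrM; ring.
  by apply: Tadd; [apply: Tadd|]; try apply: Tmul => //; apply: TP; apply: Pnat.
have b3 : T (((a + 2) * (b + 2))%:R - (n * n)%:R * (x * y)).
  have -> : ((a + 2) * (b + 2))%:R - (n * n)%:R * (x * y) = ((a + 2)%:R - n%:R * x) * (b + 2)%:R
     + (n%:R * x) * ((b + 2)%:R - n%:R * y) by rewrite !natrM; ring.
  apply: Tadd; apply: Tmul => //; try (apply: TP; apply: Pnat).
  by apply: Tmul => //; apply: TP; apply: Pnat.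
have a1 := @PhiA x a%:Z n n0 h11; have b1 := @PhiB x (a + 2)%N%:Z n n0 h12.
have a2 := @PhiA y b%:Z n n0 h21; have b2 := @PhiB y (b + 2)%N%:Z n n0 h22.
have a4 := @PhiA (x * y) (a * b)%N%:Z (n * n) nn0 a3.
have b4 := @PhiB (x * y) ((a + 2) * (b + 2))%N%:Z (n * n) nn0 b3.
move: a1 b1 a2 b2 a4 b4.
rewrite -![(_%:Z)%:~R]/(_%:R) !natrM !natrD.
set X := Phi x; set Y := Phi y; set Z := Phi (x * y); set nn := (n%:R : Rt).
set A := (a%:R : Rt); set Bb := (b%:R : Rt) => a1 b1 a2 b2 a4 b4.
have A0 : 0 <= A by apply: ler0n.
have B0 : 0 <= Bb by apply: ler0n.
have n1 : 1 <= nn by rewrite /nn ler1n.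
have p1 : A * Bb <= (nn * X) * (nn * Y) by apply: ler_pM.
have p2 : (nn * X) * (nn * Y) <= (A + 2) * (Bb + 2) by apply: ler_pM => //; lra.
have q1 : nn * nn * (Z - X * Y) <= nn * (2 * X + 2 * Y + 4).
  have : nn * nn * (Z - X * Y) <= 2 * A + 2 * Bb + 4 by nra.
  move=> h; apply: le_trans h _; nra.
have q2 : - (nn * (2 * X + 2 * Y + 4)) <= nn * nn * (Z - X * Y).
  have : - (2 * A + 2 * Bb + 4) <= nn * nn * (Z - X * Y) by nra.
  move=> h; apply: le_trans h; nra.
have np : 0 < nn by lra.
split.
- by rewrite -(ler_pM2l np) mulrA.
- by rewrite -(ler_pM2l np) mulrA mulrN.
Qed.

Lemma PhiN x : Phi (- x) = - Phi x.
Proof. have := PhiD x (- x); rewrite subrr (Phi_nat 0) => h; lra. Qed.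

Lemma PhiMn (k : nat) x : Phi (k%:R * x) = k%:R * Phi x.
Proof.
elim: k => [|k IH]; first by rewrite !mul0r (Phi_nat 0).
by rewrite -addn1 !natrD !mulrDl !mul1r PhiD IH.
Qed.

Lemma PhiM x y : Phi (x * y) = Phi x * Phi y.
Proof.
have [N1 [_ [h1 _]]] := archP x.
have [N2 [_ [h2 _]]] := archP y.
pose N := (N1 + N2)%N.
have Tx : T (x + N%:R).
  apply: TP; rewrite natrD; have -> : x + (N1%:R + N2%:R) = (N1%:R + x) + N2%:R by ring.
  by apply: Padd => //; apply: Pnat.
have Ty : T (y + N%:R).
  apply: TP; rewrite natrD; have -> : y + (N1%:R + N2%:R) = (N2%:R + y) + N1%:R by ring.
  by apply: Padd => //; apply: Pnat.
have := PhiM_pos Tx Ty.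
have -> : (x + N%:R) * (y + N%:R) = x * y + (N%:R * (x + y) + (N * N)%:R) by rewrite natrM; ring.
rewrite !PhiD PhiMn PhiD !Phi_nat natrM => h.
have : Phi (x * y) = Phi x * Phi y + 0 by rewrite (_ : 0 = 0 :> Rt) //; nra.
by rewrite addr0.
Qed.

End Total.

Definition goodT (T : set B) :=
  [/\ forall x, P x -> T x, forall x y, T x -> T y -> T (x + y),
      forall x y, T x -> T y -> T (x * y) & ~ T (-1)].

Lemma ext_total (T : set B) : goodT T ->
  (forall T' : set B, goodT T' -> T `<=` T' -> T' `<=` T) ->
  forall a, T a \/ T (- a).
Proof.
move=> [TP Tadd Tmul Tpr] Tmax a.
pose Ta (a : B) := [set z | exists t1 t2, [/\ T t1, T t2 & z = t1 + a * t2]].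
have T0 : T 0 by apply: (TP); apply: P0.
have T1 : T 1 by apply: (TP); apply: P1.
have sub (a' : B) : T `<=` Ta a' by move=> z Tz; exists z, 0; split => //; ring.
have ina (a' : B) : Ta a' a' by exists 0, 1; split => //; ring.
have pre (a' : B) : [/\ forall x, P x -> Ta a' x, forall x y, Ta a' x -> Ta a' y -> Ta a' (x + y)
      & forall x y, Ta a' x -> Ta a' y -> Ta a' (x * y)].
  split.
  - by move=> x Px; apply: sub; apply: (TP).
  - move=> x y [t1 [t2 [h1 h2 ->]]] [t3 [t4 [h3 h4 ->]]].
    by exists (t1 + t3), (t2 + t4); split; [apply: (Tadd)|apply: (Tadd)|ring].
  - move=> x y [t1 [t2 [h1 h2 ->]]] [t3 [t4 [h3 h4 ->]]].
    exists (t1 * t3 + (a' * a') * (t2 * t4)), (t1 * t4 + t2 * t3); split; last by ring.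
    + apply: (Tadd); first exact: (Tmul).
      apply: (Tmul); first by apply: (TP); apply: Psq.
      exact: (Tmul).
    + by apply: (Tadd); apply: (Tmul).
have key (a' : B) : T a' \/ Ta a' (-1).
  case: (pselect (Ta a' (-1))) => h; [by right|left].
  have [p1 p2 p3] := pre a'.
  by apply: (Tmax (Ta a')) => //; split.
case: (key a) => [|[t1 [t2 [h1 h2 e1]]]]; first by left.
case: (key (- a)) => [|[t3 [t4 [h3 h4 e2]]]]; first by right.
exfalso; apply: (Tpr).
have h2' : a * t2 = -1 - t1 by rewrite e1; ring.
have h4' : a * t4 = 1 + t3.
  have e : a * t4 - (1 + t3) = - (t3 + - a * t4) - 1 by ring.
  by apply/eqP; rewrite -subr_eq0 e -e2 opprK subrr.
have -> : -1 = t1 + t3 + t1 * t3 + (a * a) * (t2 * t4).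
  have -> : (a * a) * (t2 * t4) = (a * t2) * (a * t4) by ring.
  rewrite h2' h4'; ring.
apply: (Tadd); [apply: (Tadd); [apply: (Tadd)|apply: (Tmul)]|apply: (Tmul)] => //.
  by apply: (TP); apply: Psq.
by apply: (Tmul).
Qed.

Theorem KD (Rt : realType) (b : B) (k : nat) : (0 < k)%N -> ~ P (k%:R * b + 1) ->
  exists Phi : B -> Rt, [/\ forall x y, Phi (x + y) = Phi x + Phi y,
     forall x y, Phi (x * y) = Phi x * Phi y, Phi 1 = 1,
     forall x, P x -> 0 <= Phi x & Phi b < 0].
Proof.
move=> k0 nPb.
pose c := (2 * k)%:R * b + 1.
pose T0 := [set z | exists p q, [/\ P p, P q & z = p - c * q]].
have gT0 : goodT T0.
  split.
  - by move=> x Px; exists x, 0; split => //; [apply: P0|ring].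
  - move=> x y [p1 [q1 [h1 h2 ->]]] [p2 [q2 [h3 h4 ->]]].
    by exists (p1 + p2), (q1 + q2); split; [apply: Padd|apply: Padd|ring].
  - move=> x y [p1 [q1 [h1 h2 ->]]] [p2 [q2 [h3 h4 ->]]].
    exists (p1 * p2 + (c * c) * (q1 * q2)), (p1 * q2 + q1 * p2); split; last by ring.
    + by apply: Padd; [apply: Pmul|apply: Pmul; [apply: Psq|apply: Pmul]].
    + by apply: Padd; apply: Pmul.
  - move=> [p [q [Pp Pq e]]]; apply: nPb.
    have cq : c * q = 1 + p.
      apply/eqP; rewrite -subr_eq0; have -> : c * q - (1 + p) = - (p - c * q) - 1 by ring.
      by rewrite -e opprK subrr.
    have := lemX Pq Pp cq => Pc.
    apply: (@Pdiv 2) => //.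
    by have -> : 2%:R * (k%:R * b + 1) = c + 1 by rewrite /c natrM; ring.
pose Fam := [set T : set B | T = set0 \/ (goodT T /\ T0 `<=` T)].
have [A [FA Amax]] : exists A, Fam A /\ forall B', A `<` B' -> ~ Fam B'.
  apply: Zorn_bigcup => F FF Ftot.
  case: (pselect (exists T, F T /\ T !=set0)); last first.
    move=> hne; left; apply/seteqP; split => // z [T FT Tz]; apply: hne; exists T; split => //; by exists z.
  move=> [T1 [FT1 [z1 T1z1]]].
  have gT1 : goodT T1 /\ T0 `<=` T1.
    by case: (FF _ FT1) => // e; rewrite e in T1z1.
  have memg T z : F T -> T z -> goodT T.
    by move=> FT Tz; case: (FF _ FT) => [e|[]//]; rewrite e in Tz.
  right; split; last by move=> z T0z; exists T1 => //; apply: gT1.2.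
  split.
  - by move=> x Px; exists T1 => //; case: gT1.1 => + _ _ _; apply.
  - move=> x y [Tx FTx Txx] [Ty FTy Tyy].
    case: (Ftot _ _ FTx FTy) => hs.
    + exists Ty => //; case: (memg _ _ FTy Tyy) => _ + _ _; apply => //; exact: hs.
    + exists Tx => //; case: (memg _ _ FTx Txx) => _ + _ _; apply => //; exact: hs.
  - move=> x y [Tx FTx Txx] [Ty FTy Tyy].
    case: (Ftot _ _ FTx FTy) => hs.
    + exists Ty => //; case: (memg _ _ FTy Tyy) => _ _ + _; apply => //; exact: hs.
    + exists Tx => //; case: (memg _ _ FTx Txx) => _ _ + _; apply => //; exact: hs.
  - by move=> [Tx FTx Txx]; case: (memg _ _ FTx Txx) => _ _ _; apply.
have [gA T0A] : goodT A /\ T0 `<=` A.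
  case: FA => // eA; exfalso; apply: (Amax T0); last by right; split.
  rewrite eA; split => //; move=> /(_ 0) h.
  have : T0 0 by exists 0, 0; split; [apply: P0|apply: P0|ring].
  by move/h.
have Atot : forall a, A a \/ A (- a).
  apply: ext_total => // T' gT' AT'.
  move=> z T'z; apply: contrapT => nAz.
  apply: (Amax T'); last by right; split => //; apply: subset_trans AT'.
  by split => // /(_ z T'z).
case: gA => AP Aadd Amul Apr.
have hPn : forall j : nat, Phi Rt A j%:R = j%:R by move=> j; apply: Phi_nat.
have hPD : forall x y, Phi Rt A (x + y) = Phi Rt A x + Phi Rt A y by move=> x y; apply: PhiD.
have hPM : forall x y, Phi Rt A (x * y) = Phi Rt A x * Phi Rt A y by move=> x y; apply: PhiM.
have hPMn : forall (j : nat) x, Phi Rt A (j%:R * x) = j%:R * Phi Rt A x by move=> j x; apply: PhiMn.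
have hP1 : Phi Rt A 1 = 1 by exact: hPn 1%N.
exists (Phi Rt A); split => //.
- by move=> x Px; apply: Phi_ge0 => //; apply: (AP).
- have Ac : A (- c) by apply: (T0A); exists 0, 1; split; [apply: P0|apply: P1|ring].
  have : Phi Rt A c <= 0 by apply: Phi_le0.
  rewrite /c hPD hPMn hP1 natrM.
  have : (0 : Rt) < 2%:R * k%:R by rewrite -natrM ltr0n muln_gt0 k0.
  move=> h1 h2.
  rewrite ltNge; apply/negP => h3.
  have : 0 <= (2%:R * k%:R) * Phi Rt A b by apply: mulr_ge0 => //; apply: ltW.
  lra.
Qed.

End KD.

End KDM.


Section Basic.
Local Open Scope ring_scope.
Variables (A : comPzRingType) (le : A -> A -> Prop) (po : po_comring le).

Local Notation P x := (le 0 x).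

Lemma le_refl' x : le x x. Proof. by case: po. Qed.
Lemma le_trans' x y z : le x y -> le y z -> le x z.
Proof. by case: po => _ [_ [h _]]; apply: h. Qed.
Lemma le_add' x y t : le x y -> le (x + t) (y + t).
Proof. by case: po => _ [_ [_ [h _]]]; apply: h. Qed.
Lemma le_anti' x y : le x y -> le y x -> x = y.
Proof. by case: po => _ [h _]; apply: h. Qed.

Lemma leP0 x y : le x y <-> P (y - x).
Proof.
split => h.
- by have := le_add' (- x) h; rewrite subrr.
- by have := le_add' x h; rewrite add0r subrK.
Qed.

Lemma Padd x y : P x -> P y -> P (x + y).
Proof. move=> hx hy; apply: le_trans' hx _; by have := le_add' x hy; rewrite add0r addrC. Qed.
Lemma Pmul x y : P x -> P y -> P (x * y).
Proof. by case: po => _ [_ [_ [_ [h _]]]]; apply: h. Qed.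
Lemma Psq x : P (x * x).
Proof. by case: po => _ [_ [_ [_ [_ h]]]]. Qed.
Lemma P1 : P 1. Proof. by rewrite -(mulr1 1); apply: Psq. Qed.
Lemma P0 : P 0. Proof. exact: le_refl'. Qed.
Lemma Pnat n : P n%:R.
Proof. elim: n => [|n IH]; first exact: P0. by rewrite -addn1 natrD; apply: Padd => //; apply: P1. Qed.
Lemma Panti x : P x -> P (- x) -> x = 0.
Proof. move=> h1 h2; apply: le_anti'; last exact: h1. by apply/leP0; rewrite sub0r. Qed.

Lemma Loc_P s : Loc le s -> P s.
Proof. by move=> [[p [hp ->]] _]; apply: Padd => //; apply: P1. Qed.
Lemma Loc_div s x : Loc le s -> P (x * s) -> P x.
Proof. by move=> [_ h]; apply: h. Qed.
Lemma Loc_div' s x : Loc le s -> P (s * x) -> P x.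
Proof. by rewrite mulrC; apply: Loc_div. Qed.
Lemma Loc1 : Loc le 1.
Proof. split; first by exists 0; split; [apply: P0|rewrite addr0]. by move=> r; rewrite mulr1. Qed.
Lemma LocM s t : Loc le s -> Loc le t -> Loc le (s * t).
Proof.
move=> hs ht; split.
- case: hs => [[p [hp ->]] _]; case: ht => [[q [hq ->]] _].
  exists (p + q + p * q); split; last by ring.
  by apply: Padd; [apply: Padd|apply: Pmul].
- by move=> r; rewrite mulrA => h; apply: (Loc_div hs); apply: (Loc_div ht).
Qed.
Lemma Loc_canc s x : Loc le s -> x * s = 0 -> x = 0.
Proof.
move=> hs e; apply: Panti.
- by apply: (Loc_div hs); rewrite e; apply: P0.
- by apply: (Loc_div hs); rewrite mulNr e oppr0; apply: P0.
Qed.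

Definition eqv (p q : A * A) := p.1 * q.2 = q.1 * p.2.
Definition padd (p q : A * A) := (p.1 * q.2 + q.1 * p.2, p.2 * q.2).
Definition pmul (p q : A * A) := (p.1 * q.1, p.2 * q.2).
Definition pneg (p : A * A) := (- p.1, p.2).
Local Notation bd := (in_bd le).

Lemma bdE p : bd p <-> Loc le p.2 /\ exists n : nat, P (n%:R * p.2 + p.1) /\ P (n%:R * p.2 - p.1).
Proof.
rewrite /in_bd /loc_le /=; split => -[hL [n [h1 h2]]]; split => //; exists n.
- split.
  + move/leP0: h1. rewrite mulr1 mulNr opprK addrC. done.
  + by move/leP0: h2; rewrite mulr1.
- split; apply/leP0; rewrite mulr1.
  + by rewrite mulNr opprK addrC.
  + done.
Qed.

Lemma bd_Loc p : bd p -> Loc le p.2. Proof. by case/bdE. Qed.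

Lemma bd_add p q : bd p -> bd q -> bd (padd p q).
Proof.
move=> /bdE [Lp [n [hp1 hp2]]] /bdE [Lq [m [hq1 hq2]]]; apply/bdE; split; first exact: LocM.
exists (n + m)%N; rewrite /padd /= natrD; split.
- have -> : (n%:R + m%:R) * (p.2 * q.2) + (p.1 * q.2 + q.1 * p.2)
     = q.2 * (n%:R * p.2 + p.1) + p.2 * (m%:R * q.2 + q.1) by ring.
  by apply: Padd; apply: Pmul => //; apply: Loc_P.
- have -> : (n%:R + m%:R) * (p.2 * q.2) - (p.1 * q.2 + q.1 * p.2)
     = q.2 * (n%:R * p.2 - p.1) + p.2 * (m%:R * q.2 - q.1) by ring.
  by apply: Padd; apply: Pmul => //; apply: Loc_P.
Qed.

Lemma bd_neg p : bd p -> bd (pneg p).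
Proof.
move=> /bdE [L [n [h1 h2]]]; apply/bdE; split => //; exists n; rewrite /pneg /=.
by split; [rewrite -[_ + - _]/(_ - _)| rewrite opprK].
Qed.

Lemma bd_nat (k : nat) : bd (k%:R, 1).
Proof.
apply/bdE; split; first exact: Loc1.
by exists k; rewrite /= mulr1 subrr; split; [rewrite -natrD; apply: Pnat|apply: P0].
Qed.

Lemma eqvE p q : eqv p q <-> p.1 * q.2 - q.1 * p.2 = 0.
Proof. by rewrite /eqv; split => [->|/eqP]; [rewrite subrr|rewrite subr_eq0 => /eqP]. Qed.

Lemma eqv_refl p : eqv p p. Proof. by rewrite /eqv mulrC. Qed.
Lemma eqv_sym p q : eqv p q -> eqv q p. Proof. by rewrite /eqv => ->. Qed.
Lemma eqv_trans q p r : Loc le q.2 -> eqv p q -> eqv q r -> eqv p r.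
Proof.
move=> Lq /eqvE e1 /eqvE e2; apply/eqvE; apply: (Loc_canc Lq).
have -> : (p.1 * r.2 - r.1 * p.2) * q.2 = (p.1 * q.2 - q.1 * p.2) * r.2 + (q.1 * r.2 - r.1 * q.2) * p.2 by ring.
by rewrite e1 e2 !mul0r addr0.
Qed.
Lemma eqv_add p p' q q' : eqv p p' -> eqv q q' -> eqv (padd p q) (padd p' q').
Proof.
move=> /eqvE e1 /eqvE e2; apply/eqvE; rewrite /padd /=.
have -> : (p.1 * q.2 + q.1 * p.2) * (p'.2 * q'.2) - (p'.1 * q'.2 + q'.1 * p'.2) * (p.2 * q.2)
  = (p.1 * p'.2 - p'.1 * p.2) * (q.2 * q'.2) + (q.1 * q'.2 - q'.1 * q.2) * (p.2 * p'.2) by ring.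
by rewrite e1 e2 !mul0r addr0.
Qed.
Lemma eqv_mul p p' q q' : eqv p p' -> eqv q q' -> eqv (pmul p q) (pmul p' q').
Proof.
move=> /eqvE e1 /eqvE e2; apply/eqvE; rewrite /pmul /=.
have -> : p.1 * q.1 * (p'.2 * q'.2) - p'.1 * q'.1 * (p.2 * q.2)
  = (p.1 * p'.2 - p'.1 * p.2) * (q.1 * q'.2) + (p'.1 * p.2) * (q.1 * q'.2 - q'.1 * q.2) by ring.
by rewrite e1 e2 !mul0r mulr0 addr0.
Qed.
Lemma eqv_neg p p' : eqv p p' -> eqv (pneg p) (pneg p').
Proof. by rewrite /eqv /pneg /= !mulNr => ->. Qed.

Lemma eqv_P p q : Loc le p.2 -> Loc le q.2 -> eqv p q -> P p.1 -> P q.1.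
Proof.
move=> Lp Lq e h; apply: (Loc_div Lp); rewrite -e; apply: Pmul => //; exact: Loc_P.
Qed.

Variable (nL : nat_in_Loc le).

Lemma P_divn n x : (0 < n)%N -> P (n%:R * x) -> P x.
Proof. by move=> n0; apply: Loc_div'; apply: nL. Qed.

Lemma bd_mul p q : bd p -> bd q -> bd (pmul p q).
Proof.
move=> /bdE [Lp [n [hp1 hp2]]] /bdE [Lq [m [hq1 hq2]]]; apply/bdE; split; first exact: LocM.
exists (n * m)%N; rewrite /pmul /= natrM; split; apply: (@P_divn 2) => //.
- have -> : 2%:R * (n%:R * m%:R * (p.2 * q.2) + p.1 * q.1)
     = (n%:R * p.2 + p.1) * (m%:R * q.2 + q.1) + (n%:R * p.2 - p.1) * (m%:R * q.2 - q.1) by ring.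
  by apply: Padd; apply: Pmul.
- have -> : 2%:R * (n%:R * m%:R * (p.2 * q.2) - p.1 * q.1)
     = (n%:R * p.2 - p.1) * (m%:R * q.2 + q.1) + (n%:R * p.2 + p.1) * (m%:R * q.2 - q.1) by ring.
  by apply: Padd; apply: Pmul.
Qed.

Lemma bd_inv n : (0 < n)%N -> bd (1, n%:R).
Proof.
move=> n0; apply/bdE; split; first exact: nL.
exists 1%N; rewrite /= mul1r; split; first by apply: Padd; [apply: Pnat|apply: P1].
by case: n n0 => // k _; rewrite -addn1 natrD addrK; apply: Pnat.
Qed.

End Basic.
Definition qhyps (A : comPzRingType) (le : A -> A -> Prop) := po_comring le /\ nat_in_Loc le.
Definition cls (A : comPzRingType) (le : A -> A -> Prop) (p : A * A) : set (A * A) :=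
  [set q | in_bd le q /\ eqv q p].
Record Bt (A : comPzRingType) (le : A -> A -> Prop) (H : qhyps le) := MkB {
  bset : set (A * A); bP : exists p, in_bd le p /\ bset = cls le p }.

Section Quot.
Local Open Scope ring_scope.
Variables (A : comPzRingType) (le : A -> A -> Prop) (H : qhyps le).
Let po := H.1.
Let nL := H.2.
Let bdA := bd_add po.
Let bdM := bd_mul po nL.
Let bdN := bd_neg po.
Let bdL := bd_Loc po.
Let eqvT := eqv_trans po.
Local Notation bd := (in_bd le).
Local Notation Bq := (Bt H).

Lemma bd01 : bd (0, 1).
Proof. by have := bd_nat po 0; rewrite mulr0n. Qed.

Definition pfix (p : A * A) := if pselect (bd p) then p else (0, 1).
Lemma pfix_bd p : bd (pfix p). Proof. rewrite /pfix; destruct (pselect (bd p)) => //; exact: bd01. Qed.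
Lemma pfixE p : bd p -> pfix p = p. Proof. by move=> h; rewrite /pfix; destruct (pselect (bd p)). Qed.

Definition qpi (p : A * A) : Bq := @MkB _ _ H (cls le (pfix p)) (ex_intro _ (pfix p) (conj (pfix_bd p) erefl)).

Lemma Bt_ext (x y : Bq) : bset x = bset y -> x = y.
Proof.
case: x => X hX; case: y => Y hY /= e; subst Y.
by rewrite (Prop_irrelevance hX hY).
Qed.

Lemma qpi_eq p q : bd p -> bd q -> (qpi p = qpi q <-> eqv p q).
Proof.
move=> bp bq; split.
- move=> /(f_equal (@bset _ _ H)) /=; rewrite (pfixE bp) (pfixE bq) => e.
  have : cls le q q by split => //; apply: eqv_refl.
  by rewrite -e => -[_ /eqv_sym].
- move=> e; apply: Bt_ext => /=; rewrite (pfixE bp) (pfixE bq).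
  apply/seteqP; split => r [br er]; split => //.
  + exact: (eqvT (bdL bp) er e).
  + exact: (eqvT (bdL bq) er (eqv_sym e)).
Qed.

Lemma qpiP (x : Bq) : exists p, bd p /\ x = qpi p.
Proof.
case: x => X [p [bp eX]]; exists p; split => //.
by apply: Bt_ext => /=; rewrite pfixE.
Qed.

Definition rep (x : Bq) : A * A := projT1 (cid (qpiP x)).
Lemma rep_bd x : bd (rep x). Proof. by rewrite /rep; case: cid => p []. Qed.
Lemma repK x : qpi (rep x) = x. Proof. by rewrite /rep; case: cid => p [] _ <-. Qed.
Lemma rep_pi p : bd p -> eqv (rep (qpi p)) p.
Proof. by move=> bp; apply/qpi_eq => //; [exact: rep_bd|rewrite repK]. Qed.

Definition qzero : Bq := qpi (0, 1).
Definition qone : Bq := qpi (1, 1).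
Definition qadd (x y : Bq) : Bq := qpi (padd (rep x) (rep y)).
Definition qmul (x y : Bq) : Bq := qpi (pmul (rep x) (rep y)).
Definition qopp (x : Bq) : Bq := qpi (pneg (rep x)).

Lemma qadd_pi p q : bd p -> bd q -> qadd (qpi p) (qpi q) = qpi (padd p q).
Proof.
move=> bp bq; apply/qpi_eq; try apply: bdA => //; try apply: rep_bd.
by apply: eqv_add; apply: rep_pi.
Qed.
Lemma qmul_pi p q : bd p -> bd q -> qmul (qpi p) (qpi q) = qpi (pmul p q).
Proof.
move=> bp bq; apply/qpi_eq; try apply: bdM => //; try apply: rep_bd.
by apply: eqv_mul; apply: rep_pi.
Qed.
Lemma qopp_pi p : bd p -> qopp (qpi p) = qpi (pneg p).
Proof.
move=> bp; apply/qpi_eq; try apply: bdN => //; try apply: rep_bd.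
by apply: eqv_neg; apply: rep_pi.
Qed.

Lemma bd11 : bd (1, 1). Proof. by have := bd_nat po 1. Qed.

Lemma qaddA : associative qadd.
Proof.
move=> x y z; case: (qpiP x) => p [bp ->]; case: (qpiP y) => q [bq ->]; case: (qpiP z) => r [br ->].
rewrite !qadd_pi //; try by repeat apply: bdA.
apply/qpi_eq; try by repeat apply: bdA.
rewrite /eqv /padd /=; ring.
Qed.
Lemma qaddC : commutative qadd.
Proof.
move=> x y; case: (qpiP x) => p [bp ->]; case: (qpiP y) => q [bq ->].
rewrite !qadd_pi //; apply/qpi_eq; try by apply: bdA.
rewrite /eqv /padd /=; ring.
Qed.
Lemma qadd0 : left_id qzero qadd.
Proof.
move=> x; case: (qpiP x) => p [bp ->]; rewrite /qzero qadd_pi //; last exact: bd01.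
apply/qpi_eq => //; first by apply: bdA => //; exact: bd01.
rewrite /eqv /padd /=; ring.
Qed.
Lemma qaddN : left_inverse qzero qopp qadd.
Proof.
move=> x; case: (qpiP x) => p [bp ->]; rewrite qopp_pi // qadd_pi //; last exact: bdN.
apply/qpi_eq; [by apply: bdA => //; exact: bdN|exact: bd01|].
rewrite /eqv /padd /pneg /=; ring.
Qed.
Lemma qmulA : associative qmul.
Proof.
move=> x y z; case: (qpiP x) => p [bp ->]; case: (qpiP y) => q [bq ->]; case: (qpiP z) => r [br ->].
rewrite !qmul_pi //; try by repeat apply: bdM.
apply/qpi_eq; try by repeat apply: bdM.
rewrite /eqv /pmul /=; ring.
Qed.
Lemma qmulC : commutative qmul.
Proof.
move=> x y; case: (qpiP x) => p [bp ->]; case: (qpiP y) => q [bq ->].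
rewrite !qmul_pi //; apply/qpi_eq; try by apply: bdM.
rewrite /eqv /pmul /=; ring.
Qed.
Lemma qmul1 : left_id qone qmul.
Proof.
move=> x; case: (qpiP x) => p [bp ->]; rewrite /qone qmul_pi //; last exact: bd11.
apply/qpi_eq => //; first by apply: bdM => //; exact: bd11.
rewrite /eqv /pmul /=; ring.
Qed.
Lemma qmulDl : left_distributive qmul qadd.
Proof.
move=> x y z; case: (qpiP x) => p [bp ->]; case: (qpiP y) => q [bq ->]; case: (qpiP z) => r [br ->].
rewrite (qadd_pi bp bq) (qmul_pi (bdA bp bq) br) (qmul_pi bp br) (qmul_pi bq br).
rewrite (qadd_pi (bdM bp br) (bdM bq br)).
apply/qpi_eq; [exact: bdM (bdA bp bq) br|exact: bdA (bdM bp br) (bdM bq br)|].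
rewrite /eqv /pmul /padd /=; ring.
Qed.

End Quot.

HB.instance Definition _ (A : comPzRingType) (le : A -> A -> Prop) (H : qhyps le) := gen_eqMixin (Bt H).
HB.instance Definition _ (A : comPzRingType) (le : A -> A -> Prop) (H : qhyps le) := gen_choiceMixin (Bt H).
HB.instance Definition _ (A : comPzRingType) (le : A -> A -> Prop) (H : qhyps le) :=
  GRing.isZmodule.Build (Bt H) (@qaddA A le H) (@qaddC A le H) (@qadd0 A le H) (@qaddN A le H).
HB.instance Definition _ (A : comPzRingType) (le : A -> A -> Prop) (H : qhyps le) :=
  GRing.Zmodule_isComPzRing.Build (Bt H) (@qmulA A le H) (@qmulC A le H) (@qmul1 A le H) (@qmulDl A le H).


Section Bridge.
Local Open Scope classical_set_scope.
Local Open Scope ring_scope.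
Variables (A : comPzRingType) (le : A -> A -> Prop) (po : po_comring le) (nL : nat_in_Loc le).
Definition HH : qhyps le := conj po nL.
Local Notation Bq := (Bt HH).
Local Notation bd := (in_bd le).
Local Notation P x := (le 0 x).
Local Notation pi := (qpi HH).
Let bdA := bd_add po.
Let bdM := bd_mul po nL.
Let bdN := bd_neg po.
Let bdL := bd_Loc po.

Lemma qpi_add p q : bd p -> bd q -> pi p + pi q = pi (padd p q).
Proof. exact: qadd_pi. Qed.
Lemma qpi_mul p q : bd p -> bd q -> pi p * pi q = pi (pmul p q).
Proof. exact: qmul_pi. Qed.
Lemma qpi_opp p : bd p -> - pi p = pi (pneg p).
Proof. exact: qopp_pi. Qed.
Lemma qpi1 : 1 = pi (1, 1). Proof. by []. Qed.
Lemma qpi0 : 0 = pi (0, 1). Proof. by []. Qed.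
Lemma qpi_eqv p q : bd p -> bd q -> eqv p q -> pi p = pi q.
Proof. by move=> bp bq /(qpi_eq HH bp bq). Qed.
Lemma bd_nat' (k : nat) : bd (k%:R, 1). Proof. exact: bd_nat. Qed.
Lemma qpi_nat (k : nat) : (k%:R : Bq) = pi (k%:R, 1).
Proof.
elim: k => [|k IH]; first by rewrite mulr0n qpi0; apply: qpi_eqv; [exact: (bd_nat' 0)|exact: bd_nat'|rewrite /eqv /=; ring].
rewrite mulrS IH qpi1 qpi_add; [|exact: (bd_nat' 1)|exact: bd_nat'].
apply: qpi_eqv; [by apply: bdA; [exact: (bd_nat' 1)|exact: bd_nat']|exact: bd_nat'|].
by rewrite /eqv /padd /= mulrS; ring.
Qed.

Definition PB (x : Bq) := exists p, [/\ bd p, x = pi p & P p.1].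

Lemma PB_pi p : bd p -> P p.1 -> PB (pi p). Proof. by move=> bp hp; exists p. Qed.
Lemma PB_inv p : bd p -> PB (pi p) -> P p.1.
Proof.
move=> bp [q [bq /(qpi_eq HH bp bq) e hq]].
exact: (eqv_P po (bdL bq) (bdL bp) (eqv_sym e) hq).
Qed.

Lemma PBadd x y : PB x -> PB y -> PB (x + y).
Proof.
move=> [p [bp -> hp]] [q [bq -> hq]]; rewrite qpi_add //; apply: PB_pi; first exact: bdA.
rewrite /padd /=; apply: Padd => //; apply: Pmul => //; apply: Loc_P => //; exact: bdL.
Qed.
Lemma PBmul x y : PB x -> PB y -> PB (x * y).
Proof.
move=> [p [bp -> hp]] [q [bq -> hq]]; rewrite qpi_mul //; apply: PB_pi; first exact: bdM.
by rewrite /pmul /=; apply: Pmul.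
Qed.
Lemma PBsq x : PB (x * x).
Proof.
case: (qpiP x) => p [bp ->]; rewrite qpi_mul //; apply: PB_pi; first exact: bdM.
by rewrite /pmul /=; apply: Psq.
Qed.
Lemma PBarch x : exists n : nat, PB (n%:R - x) /\ PB (n%:R + x).
Proof.
case: (qpiP x) => p [bp ->]; have [_ [n [h1 h2]]] := (bdE po p).1 bp.
exists n; rewrite qpi_nat qpi_opp // !qpi_add //; try exact: bd_nat'; try exact: bdN.
split; apply: PB_pi.
- by apply: bdA; [exact: bd_nat'|exact: bdN].
- by have -> : (padd (n%:R, 1) (pneg p)).1 = n%:R * p.2 - p.1 by rewrite /padd /pneg /=; ring.
- by apply: bdA; [exact: bd_nat'|].
- by have -> : (padd (n%:R, 1) p).1 = n%:R * p.2 + p.1 by rewrite /padd /=; ring.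
Qed.
Lemma PBinv (n : nat) : (0 < n)%N -> exists y, PB y /\ n%:R * y = 1.
Proof.
move=> n0; have bi := bd_inv po nL n0.
exists (pi (1, n%:R)); split; first by apply: PB_pi; [exact: bi|exact: (P1 po)].
rewrite qpi_nat qpi_mul //; last exact: bd_nat'.
rewrite qpi1; apply: qpi_eqv; [by apply: bdM => //; exact: bd_nat'|exact: (bd_nat' 1)|].
by rewrite /eqv /pmul /=; ring.
Qed.

End Bridge.

Section Hom.
Local Open Scope ring_scope.
Variables (B : comPzRingType) (F : B -> R).
Hypotheses (FD : forall x y, F (x + y) = F x + F y) (FM : forall x y, F (x * y) = F x * F y) (F1 : F 1 = 1).
Lemma F0 : F 0 = 0. Proof. have := FD 0 0; rewrite addr0 => h; lra. Qed.
Lemma FN x : F (- x) = - F x. Proof. have := FD x (- x); rewrite subrr F0 => h; lra. Qed.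
Lemma Fnat k : F k%:R = k%:R.
Proof. elim: k => [|k IH]; first by rewrite !mulr0n F0. by rewrite !mulrS FD F1 IH. Qed.
Lemma FB x y : F (x - y) = F x - F y. Proof. by rewrite FD FN. Qed.
End Hom.

Section Chars.
Local Open Scope classical_set_scope.
Local Open Scope ring_scope.
Variables (A : comPzRingType) (le : A -> A -> Prop) (po : po_comring le) (nL : nat_in_Loc le).
Local Notation Bq := (Bt (HH po nL)).
Local Notation bd := (in_bd le).
Local Notation P x := (le 0 x).
Local Notation pi := (qpi (HH po nL)).
Let bdA := bd_add po.
Let bdM := bd_mul po nL.
Let bdN := bd_neg po.
Let bdL := bd_Loc po.

Definition phiL (G : Bq -> R) : charT A := fun p => if pselect (bd p) then G (pi p) else 0.
Lemma phiL_pi G p : bd p -> phiL G p = G (pi p).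
Proof. by move=> h; rewrite /phiL; destruct (pselect (bd p)). Qed.

Lemma lift_char (G : Bq -> R) :
  (forall x y, G (x + y) = G x + G y) -> (forall x y, G (x * y) = G x * G y) -> G 1 = 1 ->
  (forall x, PB x -> 0 <= G x) -> is_char le (phiL G).
Proof.
move=> GD GM G1 Gp; split; [|split; [|split; [|split; [|split]]]].
- by move=> p h; rewrite /phiL; destruct (pselect (bd p)).
- move=> p q bp bq e; rewrite !phiL_pi //; congr G; exact: qpi_eqv.
- move=> p q bp bq; rewrite !phiL_pi //; last exact: (bdA bp bq).
  by rewrite -GD qpi_add.
- move=> p q bp bq; rewrite !phiL_pi //; last exact: (bdM bp bq).
  by rewrite -GM qpi_mul.
- by rewrite phiL_pi ?G1 //; exact: (bd_nat' po 1).
- move=> p bp hp; rewrite phiL_pi //; apply: Gp; apply: PB_pi => //.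
  by move: hp; rewrite /loc_le /= mul0r mulr1.
Qed.

Section Char.
Variable phi : charT A.
Hypothesis hphi : is_char le phi.

Definition Gof (x : Bq) : R := phi (rep x).
Lemma Gof_pi p : bd p -> Gof (pi p) = phi p.
Proof.
move=> bp; rewrite /Gof; case: hphi => _ [he _]; apply: he => //; first exact: rep_bd.
exact: rep_pi.
Qed.
Lemma GofD x y : Gof (x + y) = Gof x + Gof y.
Proof.
case: (qpiP x) => p [bp ->]; case: (qpiP y) => q [bq ->].
rewrite qpi_add // !Gof_pi //; last exact: bdA.
by case: hphi => _ [_ [h _]]; apply: h.
Qed.
Lemma GofM x y : Gof (x * y) = Gof x * Gof y.
Proof.
case: (qpiP x) => p [bp ->]; case: (qpiP y) => q [bq ->].
rewrite qpi_mul // !Gof_pi //; last exact: bdM.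
by case: hphi => _ [_ [_ [h _]]]; apply: h.
Qed.
Lemma Gof1 : Gof 1 = 1.
Proof. by rewrite qpi1 Gof_pi; [case: hphi => _ [_ [_ [_ [h _]]]]|exact: (bd_nat' po 1)]. Qed.
Lemma Gof_pos x : PB x -> 0 <= Gof x.
Proof.
move=> [p [bp -> hp]]; rewrite Gof_pi //.
case: hphi => _ [_ [_ [_ [_ h]]]]; apply: h => //.
by rewrite /loc_le /= mul0r mulr1.
Qed.
Lemma Gof_nat k : Gof k%:R = k%:R. Proof. by apply: Fnat; [exact: GofD|exact: Gof1]. Qed.
Lemma GofB x y : Gof (x - y) = Gof x - Gof y. Proof. by apply: FB; exact: GofD. Qed.

Lemma char_bound p (n : nat) : bd p -> P (n%:R * p.2 + p.1) -> P (n%:R * p.2 - p.1) ->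
  - n%:R <= phi p <= n%:R.
Proof.
move=> bp h1 h2.
have e1 : PB (n%:R - pi p).
  rewrite qpi_nat qpi_opp // qpi_add //; [|exact: bd_nat'|exact: bdN].
  apply: PB_pi; first by apply: bdA; [exact: bd_nat'|exact: bdN].
  by have -> : (padd (n%:R, 1) (pneg p)).1 = n%:R * p.2 - p.1 by rewrite /padd /pneg /=; ring.
have e2 : PB (n%:R + pi p).
  rewrite qpi_nat qpi_add //; [|exact: bd_nat'].
  apply: PB_pi; first by apply: bdA; [exact: bd_nat'|].
  by have -> : (padd (n%:R, 1) p).1 = n%:R * p.2 + p.1 by rewrite /padd /=; ring.
have := Gof_pos e1; have := Gof_pos e2.
rewrite GofD GofB Gof_nat Gof_pi // => a b.
apply/andP; split; lra.
Qed.

End Char.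
End Chars.

Section Dirs.
Local Open Scope classical_set_scope.
Local Open Scope ring_scope.
Variables (A : comPzRingType) (le : A -> A -> Prop) (po : po_comring le) (nL : nat_in_Loc le).
Local Notation Bq := (Bt (HH po nL)).
Local Notation bd := (in_bd le).
Local Notation P x := (le 0 x).
Local Notation pi := (qpi (HH po nL)).
Let bdA := bd_add po.
Let bdM := bd_mul po nL.
Let bdN := bd_neg po.
Let bdL := bd_Loc po.

Lemma Loc_ge1 s : Loc le s -> P (s - 1).
Proof. by move=> [[p [hp ->]] _]; have -> : 1 + p - 1 = p by ring. Qed.

Lemma bd_unit s : Loc le s -> bd (1, s).
Proof.
move=> Ls; apply/bdE => //; split => //; exists 1%N; rewrite /= mul1r; split.
- by apply: Padd => //; [exact: Loc_P|exact: P1].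
- exact: Loc_ge1.
Qed.

Lemma P_st s t : Loc le s -> Loc le t -> P (s * t - t).
Proof.
move=> Ls Lt; have -> : s * t - t = (s - 1) * t by ring.
by apply: Pmul => //; [exact: Loc_ge1|exact: Loc_P].
Qed.

Lemma bd_ext r s t : bd (r, s) -> Loc le t -> bd (r, s * t).
Proof.
move=> /(bdE po) [Ls [n [h1 h2]]] Lt; apply/bdE => //; split; first exact: LocM.
have hst : P (t * s - s) by apply: P_st.
exists n; rewrite /=; split.
- have -> : n%:R * (s * t) + r = n%:R * (t * s - s) + (n%:R * s + r) by ring.
  by apply: Padd => //; apply: Pmul => //; apply: Pnat.
- have -> : n%:R * (s * t) - r = n%:R * (t * s - s) + (n%:R * s - r) by ring.
  by apply: Padd => //; apply: Pmul => //; apply: Pnat.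
Qed.

Lemma pos_of_prod (a b : R) : 0 <= a -> 0 <= b -> 0 < a * b -> 0 < a.
Proof. move=> ha hb hab; rewrite lt_neqAle ha andbT; apply/eqP => e; move: hab; rewrite -e mul0r ltxx. by []. Qed.

Lemma easy_core r h s t (phi : charT A) : Loc le s -> Loc le t -> bd (r, s) ->
  P (t + h) -> P (t - h) -> (forall k : nat, (0 < k)%N -> P (k%:R * r + h)) ->
  is_char le phi -> 0 < phi (1, s * t) -> 0 < phi (1, s) /\ 0 <= phi (r, s).
Proof.
move=> Ls Lt brs ht1 ht2 hk hphi hpos.
pose G := @Gof A le po nL phi.
have GD : forall x y, G (x + y) = G x + G y by apply: (GofD hphi).
have GM : forall x y, G (x * y) = G x * G y by apply: (GofM hphi).
have G1 : G 1 = 1 by apply: (Gof1 po nL hphi).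
have Gn : forall k : nat, G k%:R = k%:R by apply: (Gof_nat po nL hphi).
have GB : forall x y, G (x - y) = G x - G y by move=> x y; apply: GofB.
have Gp : forall x, @PB A le po nL x -> 0 <= G x by apply: (Gof_pos hphi).
have Gpi : forall p, bd p -> G (pi p) = phi p by move=> p; apply: (Gof_pi po nL hphi).
have bs := bd_unit Ls; have bt := bd_unit Lt; have bst := bd_unit (LocM po Ls Lt).
have est : pi (1, s * t) = pi (1, s) * pi (1, t) by rewrite qpi_mul // /pmul /= mul1r.
have Ges : 0 <= G (pi (1, s)) by apply: Gp; apply: PB_pi => //; exact: P1.
have Get : 0 <= G (pi (1, t)) by apply: Gp; apply: PB_pi => //; exact: P1.
have hprod : 0 < G (pi (1, s)) * G (pi (1, t)) by rewrite -GM -est Gpi.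
have Ges' : 0 < G (pi (1, s)) by apply: pos_of_prod hprod.
have Get' : 0 < G (pi (1, t)) by rewrite mulrC in hprod; apply: pos_of_prod hprod.
have hst := P_st Ls Lt.
have bh : bd (h, s * t).
  apply/bdE => //; split; first exact: LocM.
  exists 1%N; rewrite /= mul1r; split.
  - have -> : s * t + h = (s * t - t) + (t + h) by ring.
    by apply: Padd.
  - have -> : s * t - h = (s * t - t) + (t - h) by ring.
    by apply: Padd.
have brst : bd (r, s * t) by apply: bd_ext.
have ea : pi (r, s * t) = pi (r, s) * pi (1, t) by rewrite qpi_mul // /pmul /= mulr1.
have hk' : forall k : nat, (0 < k)%N -> 0 <= k%:R * G (pi (r, s * t)) + G (pi (h, s * t)).
  move=> k k0; rewrite -Gn -GM -GD; apply: Gp.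
  rewrite qpi_nat qpi_mul //; last exact: bd_nat'.
  rewrite qpi_add //; last by apply: bdM => //; exact: bd_nat'.
  apply: PB_pi; first by apply: bdA => //; apply: bdM => //; exact: bd_nat'.
  have -> : (padd (pmul (k%:R, 1) (r, s * t)) (h, s * t)).1 = (k%:R * r + h) * (s * t)
    by rewrite /padd /pmul /=; ring.
  exact: (Pmul po (hk k k0) (Loc_P po (LocM po Ls Lt))).
have hh1 : G (pi (h, s * t)) <= 1.
  have : 0 <= G (1 - pi (h, s * t)).
    apply: Gp; rewrite qpi1 qpi_opp // qpi_add //; [|exact: (bd_nat' po 1)|exact: bdN].
    apply: PB_pi; first by apply: bdA; [exact: (bd_nat' po 1)|exact: bdN].
    have -> : (padd (1, 1) (pneg (h, s * t))).1 = s * t - t + (t - h) by rewrite /padd /pneg /=; ring.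
    by apply: Padd.
  by rewrite GB G1 => h'; lra.
have Ga : 0 <= G (pi (r, s * t)).
  rewrite leNgt; apply/negP => hneg.
  pose k := (Num.truncn (1 / (- G (pi (r, s * t))))).+1.
  have hk1 : 1 / (- G (pi (r, s * t))) < k%:R by apply: Num.Theory.truncnS_gt.
  have := hk' k isT.
  rewrite ltr_pdivrMr ?oppr_gt0 // in hk1.
  move=> h2; lra.
split; first by rewrite -Gpi.
rewrite -Gpi //; move: Ga; rewrite ea GM => Ga.
rewrite leNgt; apply/negP => hb.
have : G (pi (r, s)) * G (pi (1, t)) < 0 by rewrite pmulr_llt0.
lra.
Qed.


Lemma easy_dir r : localizable le -> pos_dagger le r -> gelfand_nonneg le r.
Proof.
move=> loc [h hk].
have [s [Ls [h1 h2]]] := loc r.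
have [t [Lt [h3 h4]]] := loc h.
have brs : bd (r, s).
  apply/bdE => //; split => //; exists 1%N; rewrite /= mul1r; split.
  - by move/(leP0 po): h1; rewrite opprK addrC.
  - by move/(leP0 po): h2.
have ht1 : P (t + h) by move/(leP0 po): h3; rewrite opprK addrC.
have ht2 : P (t - h) by move/(leP0 po): h4.
exists s; split => //; split => //.
exists (O_fin le (s * t)); split; first by exists (s * t); split => //; exact: LocM.
split.
- move=> phi [Kphi hpos]; split => //.
  by have [] := easy_core Ls Lt brs ht1 ht2 hk Kphi hpos.
- move=> phi [Kphi hpos]; have [a b] := easy_core Ls Lt brs ht1 ht2 hk Kphi hpos.
  rewrite /gelfand_rep; apply: mulr_ge0 => //; rewrite invr_ge0; exact: ltW.
Qed.

Lemma hard_dir r : gelfand_nonneg le r -> pos_dagger le r.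
Proof.
move=> [s [Ls [brs [Om [[t [Lt ->]] [hsub hpos]]]]]].
exists (s * t) => k k0; apply: contrapT => nk.
have brst : bd (r, s * t) by apply: bd_ext.
pose b := pi (r, s * t).
have bk1 : bd (k%:R, 1) := bd_nat' po k.
have b11 : bd (1, 1) := bd_nat' po 1.
have nPb : ~ @PB A le po nL (k%:R * b + 1).
  rewrite /b qpi_nat qpi_mul // qpi1 qpi_add //; last by apply: bdM.
  move=> /PB_inv; move=> /(_ (bdA (bdM bk1 brst) b11)).
  have -> : (padd (pmul (k%:R, 1) (r, s * t)) (1, 1)).1 = k%:R * r + s * t by rewrite /padd /pmul /=; ring.
  exact: nk.
have [G [GD GM G1 Gp Gb]] := @KDM.KD _ _ (@PBadd A le po nL) (@PBmul A le po nL) (@PBsq A le po nL)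
   (@PBarch A le po nL) (@PBinv A le po nL) R b k k0 nPb.
have hphi : is_char le (phiL G) by apply: lift_char.
have phipi : forall p, bd p -> phiL G p = G (pi p) by move=> p; apply: phiL_pi.
have bt := bd_unit Lt; have bs := bd_unit Ls.
have eb : b = pi (r, s) * pi (1, t) by rewrite qpi_mul // /pmul /= mulr1.
have Gt0 : 0 <= G (pi (1, t)) by apply: Gp; apply: PB_pi => //; exact: P1.
move: Gb; rewrite eb GM => Gb.
have Gtp : 0 < G (pi (1, t)).
  rewrite lt_neqAle Gt0 andbT; apply/eqP => e; move: Gb; rewrite -e mulr0 ltxx; by [].
have Ot : O_fin le t (phiL G) by split => //; rewrite phipi.
have [_ hs] := hsub _ Ot.
have hp := hpos _ Ot; rewrite /gelfand_rep in hp.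
have hrs : 0 <= phiL G (r, s).
  have -> : phiL G (r, s) = phiL G (1, s) * ((phiL G (1, s))^-1 * phiL G (r, s)).
    by rewrite mulrA divff ?mul1r // gt_eqF.
  by apply: mulr_ge0 => //; exact: ltW.
rewrite phipi // in hrs.
have : 0 <= G (pi (r, s)) * G (pi (1, t)) by apply: mulr_ge0.
lra.
Qed.

End Dirs.

Section Top.
Local Open Scope classical_set_scope.
Local Open Scope ring_scope.
Variables (A : comPzRingType).

Lemma evc (p : A * A) : continuous (fun f : charT A => f p).
Proof. move=> f. apply: (@proj_continuous _ (fun _ : A * A => R) p f). Qed.
Lemma evcD (p q : A * A) : continuous (fun f : charT A => f p + f q).
Proof. move=> x; have h := @continuousD R R^o _ (fun f : charT A => (f p : R^o)) (fun f : charT A => (f q : R^o)) x (@evc p x) (@evc q x). exact h. Qed.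
Lemma evcM (p q : A * A) : continuous (fun f : charT A => f p * f q).
Proof. move=> x; have h := @continuousM _ _ (fun f : charT A => f p) (fun f : charT A => f q) x (@evc p x) (@evc q x). exact h. Qed.

Lemma closed_eqs (I : Type) (D : I -> Prop) (F G : I -> charT A -> R) :
  (forall i, continuous (F i)) -> (forall i, continuous (G i)) ->
  closed [set f | forall i, D i -> F i f = G i f].
Proof.
move=> cF cG.
have -> : [set f | forall i, D i -> F i f = G i f] =
    \bigcap_(i in D) ((fun f => F i f - G i f) @^-1` [set x | x = 0]).
  apply/seteqP; split => f /=.
  - by move=> h i Di; rewrite /preimage /= h // subrr.
  - by move=> h i Di; have := h i Di; rewrite /preimage /= => /eqP; rewrite subr_eq0 => /eqP.
apply: closed_bigI => i _; apply: preimage_closed; last exact: closed_eq.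
move=> f _; have h := @continuousB R R^o _ (fun g : charT A => (F i g : R^o)) (fun g : charT A => (G i g : R^o)) f (cF i f) (cG i f).
exact h.
Qed.

Lemma closed_ges (I : Type) (D : I -> Prop) (F : I -> charT A -> R) :
  (forall i, continuous (F i)) -> closed [set f | forall i, D i -> 0 <= F i f].
Proof.
move=> cF.
have -> : [set f | forall i, D i -> 0 <= F i f] = \bigcap_(i in D) (F i @^-1` [set x | 0 <= x]).
  by apply/seteqP; split => f /=.
apply: closed_bigI => i _; apply: preimage_closed; last exact: closed_ge.
by move=> f _; apply: cF.
Qed.

Variables (le : A -> A -> Prop) (po : po_comring le) (nL : nat_in_Loc le).
Local Notation bd := (in_bd le).
Local Notation P x := (le 0 x).

Lemma K_closed : closed (Kspace le).
Proof.
have -> : Kspace le =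
  [set f | forall p : A * A, ~ bd p -> f p = 0] `&`
  ([set f | forall i : (A * A) * (A * A), [/\ bd i.1, bd i.2 & i.1.1 * i.2.2 = i.2.1 * i.1.2] -> f i.1 = f i.2] `&`
  ([set f | forall i : (A * A) * (A * A), bd i.1 /\ bd i.2 ->
        f (i.1.1 * i.2.2 + i.2.1 * i.1.2, i.1.2 * i.2.2) = f i.1 + f i.2] `&`
  ([set f | forall i : (A * A) * (A * A), bd i.1 /\ bd i.2 ->
        f (i.1.1 * i.2.1, i.1.2 * i.2.2) = f i.1 * f i.2] `&`
  ([set f | forall i : unit, True -> f (1, 1) = 1] `&`
   [set f | forall p : A * A, bd p /\ loc_le le (0, 1) p -> 0 <= f p])))).
  apply/seteqP; split => f.
  - move=> [c1 [c2 [c3 [c4 [c5 c6]]]]]; split => //; split.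
      by move=> [p q] [bp bq e]; apply: c2.
    split; first by move=> [p q] [bp bq]; apply: c3.
    split; first by move=> [p q] [bp bq]; apply: c4.
    split; first by move=> _ _; apply: c5.
    by move=> p [bp hp]; apply: c6.
  - move=> [c1 [c2 [c3 [c4 [c5 c6]]]]]; split => //; split.
      by move=> p q bp bq e; apply: (c2 (p, q)).
    split; first by move=> p q bp bq; apply: (c3 (p, q)).
    split; first by move=> p q bp bq; apply: (c4 (p, q)).
    split; first by apply: (c5 tt).
    by move=> p bp hp; apply: c6.
apply: closedI; first by apply: closed_eqs => [p|p]; [exact: evc|exact: cst_continuous].
apply: closedI; first by apply: closed_eqs => i; exact: evc.
apply: closedI; first by apply: closed_eqs => i; [exact: evc|exact: evcD].
apply: closedI; first by apply: closed_eqs => i; [exact: evc|exact: evcM].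
apply: closedI; first by apply: closed_eqs => i; [exact: evc|exact: cst_continuous].
by apply: closed_ges => p; exact: evc.
Qed.

Definition bnd (p : A * A) : R :=
  match pselect (exists n : nat, [/\ bd p, P (n%:R * p.2 + p.1) & P (n%:R * p.2 - p.1)]) with
  | left e => (projT1 (cid e))%:R
  | right _ => 0
  end.

Lemma K_box : Kspace le `<=` [set f : charT A | forall p, `[- bnd p, bnd p]%classic (f p)].
Proof.
move=> phi hphi p; rewrite /bnd.
destruct (pselect _) as [e|ne].
- case: (cid e) => n [bp h1 h2] /=.
  have := char_bound po nL hphi bp h1 h2.
  by rewrite /= in_itv /=.
- have -> : phi p = 0.
    case: hphi => h _; apply: h => bp; apply: ne.
    by have [_ [n [h1 h2]]] := (bdE po p).1 bp; exists n.
  by rewrite /= in_itv /= oppr0 lexx.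
Qed.

Lemma K_compact : compact (Kspace le).
Proof.
apply: (subclosed_compact K_closed _ K_box).
have := @tychonoff (A * A)%type (fun _ => R) (fun p => `[- bnd p, bnd p]%classic) (fun p => @segment_compact _ _ _).
exact.
Qed.

Lemma K_hausdorff : hausdorff_space (subspace (Kspace le)).
Proof.
apply: subspace_hausdorff.
exact: (@hausdorff_product _ (fun _ : A * A => R) (fun _ => @Rhausdorff R)).
Qed.

End Top.

Unset Implicit Arguments.
Local Open Scope classical_set_scope.

Theorem theorem27 (A : comPzRingType) (le : A -> A -> Prop) :
  po_comring le -> localizable le -> nat_in_Loc le ->
  [/\ compact (Kspace le),
      hausdorff_space (subspace (Kspace le)) &
      [set r | gelfand_nonneg le r] = pos_dagger le].
Proof.
move=> po loc nL; split.
- exact: K_compact po nL.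
- exact: K_hausdorff.
- apply/seteqP; split => r /=.
  + exact: hard_dir.
  + exact: easy_dir.
Qed.
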